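(* Let $p,q$ be positive integers, $n=p+q$, and let $M$ be an $n\times n$ complex matrix with $M=M^*$ and $M^*I_{p,q}M=I_{p,q}$. If $\lambda\neq 0$ is an eigenvalue of $M+I_{p,q}$, then $|\lambda|\geq 2$.
   Context: $I_{p,q}=\mathrm{diag}\{I_p,-I_q\}$, where $I_p$ is the $p\times p$ identity matrix; $M^*$ denotes the conjugate transpose. *)

(* Defs.v *)
From mathcomp Require Import all_boot all_order all_algebra.
From mathcomp Require Import complex.
From mathcomp Require Import reals.
Set Implicit Arguments. Unset Strict Implicit. Unset Printing Implicit Defensive.
Import Order.TTheory GRing.Theory Num.Theory.
Local Open Scope ring_scope.

Definition ctrmx (C : numClosedFieldType) m n (M : 'M[C]_(m, n)) : 'M[C]_(n, m) :=
  map_mx (@Num.conj C) (M^T).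

Definition Ipq (C : nzRingType) (p q : nat) : 'M[C]_(p + q) :=
  block_mx 1%:M 0 0 (- 1%:M).

(* Main.v *)
Require Import Defs.
From mathcomp Require Import all_boot all_order all_algebra.
From mathcomp Require Import complex reals.
Import Order.TTheory GRing.Theory Num.Theory.
Local Open Scope ring_scope.

Section G.
Variable C : numClosedFieldType.

Lemma ctrmxM m n k (A : 'M[C]_(m, n)) (B : 'M[C]_(n, k)) :
  ctrmx (A *m B) = ctrmx B *m ctrmx A.
Proof. by rewrite /ctrmx trmx_mul map_mxM. Qed.

Lemma ctrmxZ m n a (A : 'M[C]_(m, n)) : ctrmx (a *: A) = a^* *: ctrmx A.
Proof. by rewrite /ctrmx linearZ /= map_mxZ. Qed.

Lemma ctrmxD m n (A B : 'M[C]_(m, n)) : ctrmx (A + B) = ctrmx A + ctrmx B.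
Proof. by rewrite /ctrmx linearD /= map_mxD. Qed.

Definition sgn (p q : nat) (j : 'I_(p + q)) : C := if (j < p)%N then 1 else -1.

Lemma Ipq_diag p q : Ipq C p q = diag_mx (\row_j sgn p q j).
Proof.
apply/matrixP=> i j; rewrite /Ipq /sgn.
rewrite -(splitK i) -(splitK j); case: (split i) => i'; case: (split j) => j' /=;
  rewrite ?block_mxEul ?block_mxEur ?block_mxEdl ?block_mxEdr !mxE /=.
- by rewrite (ltn_ord i') (inj_eq (@lshift_inj _ _)).
- have -> : (lshift q i' == rshift p j') = false.
    by apply/negbTE/eqP=> /(congr1 val) /= E; move: (ltn_ord i'); rewrite E ltnNge leq_addr.
  by rewrite mulr0n.
- have -> : (rshift p i' == lshift q j') = false.
    by apply/negbTE/eqP=> /(congr1 val) /= E; move: (ltn_ord j'); rewrite -E ltnNge leq_addr.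
  by rewrite mulr0n.
- by rewrite ltnNge leq_addr /= (inj_eq (@rshift_inj _ _)) mulNrn.
Qed.

Lemma sgn2 p q (j : 'I_(p + q)) : sgn p q j * sgn p q j = 1.
Proof. by rewrite /sgn; case: ifP => _; rewrite ?mulr1 ?mulrNN ?mulr1. Qed.

Lemma Ipq_mulmx p q : Ipq C p q *m Ipq C p q = 1%:M.
Proof.
rewrite !Ipq_diag mul_mx_diag; apply/matrixP=> i j; rewrite !mxE.
by case: eqP => [->|_]; rewrite ?mulr1n ?mulr0n ?mul0r // sgn2.
Qed.

Lemma ctrmx_Ipq p q : ctrmx (Ipq C p q) = Ipq C p q.
Proof.
rewrite /ctrmx Ipq_diag; apply/matrixP=> i j; rewrite !mxE.
rewrite eq_sym; case: eqP => [->|_]; rewrite ?mulr1n ?mulr0n ?rmorph0 //.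
by rewrite /sgn; case: ifP; rewrite ?rmorph1 ?rmorphN ?rmorph1.
Qed.

Theorem main p q (M : 'M[C]_(p + q)) (lambda : C) :
  ctrmx M = M ->
  ctrmx M *m Ipq C p q *m M = Ipq C p q ->
  lambda != 0 ->
  eigenvalue (M + Ipq C p q) lambda ->
  2 <= `|lambda|.
Proof.
set J := Ipq C p q => hM hMJ l0 /eigenvalueP [v hv v0].
have hA : ctrmx (M + J) = M + J by rewrite ctrmxD hM /J ctrmx_Ipq.
have JJ : J *m J = 1%:M by exact: Ipq_mulmx.
have AJA : (M + J) *m J *m (M + J) = 2%:R *: (M + J).
  rewrite mulmxDl !mulmxDr !mulmxDl -[M *m J *m J]mulmxA JJ !mul1mx mulmx1.
  by rewrite -{1}hM hMJ scaler_nat mulr2n [J + M]addrC.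
set w := ctrmx v.
have hw : (M + J) *m w = lambda^* *: w by rewrite -hA -ctrmxM hv ctrmxZ.
have h1 : v *m ((M + J) *m J *m (M + J)) *m w = (lambda * lambda^*) *: (v *m J *m w).
  rewrite !mulmxA hv -!mulmxA hw.
  by rewrite -!scalemxAr -scalemxAl scalerA mulrC.
have h2 : v *m (2%:R *: (M + J)) *m w = (2%:R * lambda) *: (v *m w).
  rewrite -scalemxAr -scalemxAl hv. by rewrite -scalemxAl scalerA.
have E : lambda * lambda^* * (v *m J *m w) 0 0 = 2%:R * lambda * (v *m w) 0 0.
  by have := congr1 (fun X => (v *m X *m w) 0 0) AJA => /=; rewrite h1 h2 !mxE.
have hwE : forall j, w j 0 = (v 0 j)^* by move=> j; rewrite /w /ctrmx !mxE.
have ha : (v *m w) 0 0 = \sum_j `|v 0 j| ^+ 2.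
  by rewrite mxE; apply: eq_bigr => j _; rewrite hwE normCK.
have hb : `|(v *m J *m w) 0 0| <= (v *m w) 0 0.
  rewrite ha /J Ipq_diag mul_mx_diag mxE.
  apply: le_trans (ler_norm_sum _ _ _) _; apply: ler_sum => j _.
  rewrite !mxE !normrM norm_conjC.
  have -> : `|sgn p q j| = 1 by rewrite /sgn; case: ifP; rewrite ?normrN normr1.
  by rewrite mulr1 expr2.
have a0 : 0 < (v *m w) 0 0.
  rewrite ha lt_def sumr_ge0 ?andbT; last by move=> j _; rewrite exprn_ge0.
  rewrite psumr_eq0; last by move=> j _; rewrite exprn_ge0.
  apply/negP => /allP H; apply/negP: v0; rewrite negbK; apply/eqP/matrixP => i j.
  rewrite !mxE (ord1 i).
  have := H j (mem_index_enum j); rewrite /= sqrf_eq0 normr_eq0 => /eqP ->. done.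
have l0' : 0 < `|lambda| by rewrite normr_gt0.
have := congr1 Num.norm E.
rewrite !normrM norm_conjC normr_nat (ger0_norm (ltW a0)) => Eabs.
have : 2%:R * `|lambda| * (v *m w) 0 0 <= `|lambda| * `|lambda| * (v *m w) 0 0.
  by rewrite -Eabs; apply: ler_wpM2l => //; rewrite mulr_ge0.
by rewrite (mulrC 2%:R) -!mulrA ler_pM2l // ler_pM2r.
Qed.
End G.

Local Open Scope complex_scope.

Theorem corollary3p5 (R : realType) (p q : nat) (hp : (0 < p)%N) (hq : (0 < q)%N)
  (M : 'M[R[i]]_(p + q)) (lambda : R[i]) :
  ctrmx M = M ->
  ctrmx M *m Ipq R[i] p q *m M = Ipq R[i] p q ->
  lambda != 0 ->
  eigenvalue (M + Ipq R[i] p q) lambda ->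
  2 <= `|lambda|.
Proof. exact: main. Qed.
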